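(* Let $w,z\in A^+$ and let $z_0\in L$ be the first coordinate of $z$ and $w_m\in L$ be the last coordinate of $w$ determined by $L$ (i.e. the first entry of $\mathrm{sc}_L[z]$ and the last entry of $\mathrm{sc}_L[w]$). Then, (a) $\hat{\mathsf f}(wz)=\hat{\mathsf f}(wz_0){\mathsf f}(z_0)^{-1}\hat{\mathsf f}(z)=\hat{\mathsf f}(w){\mathsf f}(w_m)^{-1}\hat{\mathsf f}(w_mz)$; (b) $\check{\mathsf f}(wz)=\check{\mathsf f}(\check{\mathsf f}(w)\check{\mathsf f}(z))$.
   Context: Let $A$ be an alphabet, $A^+$ the free semigroup and $A^*$ the free monoid on $A$. For a word $w=a_1\cdots a_n$ ($a_i\in A$), $w[p,q]=a_p\cdots a_q$, $w_\alpha=w[1,n-1]$ and $w_\omega=w[2,n]$. Let $L\subseteq A^+$ be a non-empty factorial language (closed under non-empty factors) with $A\subseteq L$, and $\ddot L=\{v\in A^+: v\notin L,\ v_\alpha,v_\omega\in L\}$. For $w\in A^+$, the sequence of coordinates $\mathrm{sc}_L[w]=(w_0,\ddot w_1,w_1,\ldots,\ddot w_m,w_m)$ is defined as follows: $m\ge 0$ is the number of occurrences of elements of $\ddot L$ in $w$ (so $m=0$ iff $w\in L$, in which case $\mathrm{sc}_L[w]=(w)$); if $m>0$, $\ddot w_i=w[p_i,q_i]$ ($i=1,\dots,m$) are the successive occurrences of factors of $w$ in $\ddot L$, $w_0=w[1,q_1-1]$, $w_m=w[p_m+1,n]$ and $w_i=w[p_i+1,q_{i+1}-1]$ for $0<i<m$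 (these are the maximal factors of $w$ lying in $L$, in order). Let $G$ be a group with semigroup presentation $\langle A_G\mid R_G\rangle$; words of $A_G^+$ are identified with the elements of $G$ they represent, and by choosing a representative word for each element, $G$ is viewed as a subset of $A_G^+$. Let $X=A\cup A_G$, $L^1=L\cup\{1\}$, and let ${\mathsf f}:L\cup\ddot L\to G$ be a function. Define $\acute{\mathsf f}(1)=\grave{\mathsf f}(1)=1$, $\hat{\mathsf f}(1)=1_G$; for $w\in L$: $\check{\mathsf f}(w)=\acute{\mathsf f}(w)=\grave{\mathsf f}(w)=w$ and $\hat{\mathsf f}(w)={\mathsf f}(w)$; for $w\in A^+\setminus L$ with $\mathrm{sc}_L[w]=(w_0,\ddot w_1,w_1,\ldots,\ddot w_m,w_m)$: $\check{\mathsf f}(w)=w_0{\mathsf f}(\ddot w_1){\mathsf f}(w_1){\mathsf f}(\ddot w_2)\cdots{\mathsf f}(\ddot w_m)w_m$, $\acute{\mathsf f}(w)={\mathsf f}(w_0){\mathsf f}(\ddot w_1){\mathsf f}(w_1)\cdots{\mathsf f}(\ddot w_m)w_m$, $\grave{\mathsf f}(w)=w_0{\mathsf f}(\ddot w_1){\mathsf f}(w_1)\cdots{\mathsf f}(\ddot w_m){\mathsf f}(w_m)$, $\hat{\mathsf f}(w)={\mathsf f}(w_0){\mathsf f}(\ddot w_1){\mathsf f}(w_1)\cdots{\mathsf f}(\ddot w_m){\mathsf f}(w_m)$ (a product in $G$). Then $\check{\mathsf f}$ is extended to $X^+\to L\cup L^1GL^1$ by setting, for $w=u_0g_1u_1\cdots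 g_nu_n\in X^+\setminus A^+$ with $u_0,u_n\in A^*$, $u_1,\ldots,u_{n-1}\in A^+$, $g_1,\ldots,g_n\in A_G^+$: $\check{\mathsf f}(w)=\grave{\mathsf f}(u_0)g_1\hat{\mathsf f}(u_1)\cdots g_{n-1}\hat{\mathsf f}(u_{n-1})g_n\acute{\mathsf f}(u_n)$ (products of consecutive group elements computed in $G$). In (b), $\check{\mathsf f}(w)\check{\mathsf f}(z)$ is a word in $X^+$ and the outer $\check{\mathsf f}$ is this extension. *)

(* Defs.v *)
From HB Require Import structures.
From mathcomp Require Import all_boot monoid.
Set Implicit Arguments. Unset Strict Implicit. Unset Printing Implicit Defensive.

(* Conventions (positions are 0-indexed):
   - words of A^* are [seq A]; the empty word 1 is [::];
   - a language L is a boolean predicate on [seq A];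
   - G is an arbitrary (possibly infinite) group ([groupType], mathcomp monoid.v);
   - words of X^+ (X = A u A_G) are modelled as [seq (A + G)]: a letter [inr g]
     stands for a word of A_G^+ representing g (words over A_G are identified
     with the elements of G they represent). *)

Local Open Scope group_scope.

Definition factorial_lang (A : eqType) (L : pred (seq A)) : Prop :=
  [/\ ~~ L [::],
      (exists w, L w),
      (forall u v x, L (u ++ v ++ x) -> v != [::] -> L v) &
      (forall a : A, L [:: a])].

Section Coordinates.
Variables (A : eqType) (G : groupType) (L : pred (seq A)) (f : seq A -> G).

(* the factor w[p..q] (0-indexed, inclusive) *)
Definition factor (w : seq A) (p q : nat) : seq A := take (q.+1 - p) (drop p w).

Definition word_alpha (v : seq A) : seq A := take (size v).-1 v.
Definition word_omega (v : seq A) : seq A := behead v.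

Definition Lddot (v : seq A) : bool :=
  [&& v != [::], ~~ L v, L (word_alpha v) & L (word_omega v)].

Definition occs (w : seq A) : seq (nat * nat) :=
  [seq pq <- [seq (p, q) | p <- iota 0 (size w), q <- iota p (size w - p)]
     | Lddot (factor w pq.1 pq.2)].

(* first and last coordinates w_0 and w_m of sc_L[w] ( = w when w is in L) *)
Definition sc_first (w : seq A) : seq A :=
  if occs w is (p, q) :: _ then take q w else w.
Definition sc_last (w : seq A) : seq A :=
  if occs w is _ :: _ then drop (last (0, 0) (occs w)).1.+1 w else w.

(* f(\ddot w_1) f(w_1) f(\ddot w_2) ... f(w_{m-1}) f(\ddot w_m), computed in G *)
Fixpoint mid_prod (w : seq A) (os : seq (nat * nat)) : G :=
  match os with
  | [::] => 1
  | [:: (p, q)] => f (factor w p q)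
  | (p, q) :: (((p', q') :: _) as os') =>
      f (factor w p q) * f (take (q' - p.+1) (drop p.+1 w)) * mid_prod w os'
  end.

Definition sc_mid (w : seq A) : G := mid_prod w (occs w).

Definition fhat (w : seq A) : G :=
  if w == [::] then 1
  else if L w then f w
  else f (sc_first w) * sc_mid w * f (sc_last w).

Definition fcheckA (w : seq A) : seq (A + G) :=
  if L w then map inl w
  else map inl (sc_first w) ++ inr (sc_mid w) :: map inl (sc_last w).

Definition facute (w : seq A) : seq (A + G) :=
  if w == [::] then [::]
  else if L w then map inl w
  else inr (f (sc_first w) * sc_mid w) :: map inl (sc_last w).

Definition fgrave (w : seq A) : seq (A + G) :=
  if w == [::] then [::]
  else if L w then map inl w
  else rcons (map inl (sc_first w)) (inr (sc_mid w * f (sc_last w))).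

Fixpoint gmerge (x : seq (A + G)) : seq (A + G) :=
  match x with
  | [::] => [::]
  | inl a :: x' => inl a :: gmerge x'
  | inr g :: x' =>
      match gmerge x' with
      | inr h :: y => inr (g * h) :: y
      | y => inr g :: y
      end
  end.

(* letterwise parse: x = u_0 g_1 u_1 ... g_n u_n with g_i single group letters
   and u_i in A^* (possibly empty); a maximal A_G-block of the paper is a run
   of consecutive group letters separated by empty u_i, and since
   \hat f(1) = 1_G, merging reproduces the paper's block products. *)
Fixpoint xparse (x : seq (A + G)) : seq A * seq (G * seq A) :=
  match x with
  | [::] => ([::], [::])
  | inl a :: x' => let: (u, ps) := xparse x' in (a :: u, ps)
  | inr g :: x' => let: (u, ps) := xparse x' in ([::], (g, u) :: ps)
  end.

Fixpoint xbody (ps : seq (G * seq A)) : seq (A + G) :=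
  match ps with
  | [::] => [::]
  | [:: (g, u)] => inr g :: facute u
  | (g, u) :: ps' => inr g :: inr (fhat u) :: xbody ps'
  end.

Definition fcheckX (x : seq (A + G)) : seq (A + G) :=
  match xparse x with
  | (u, [::]) => fcheckA u
  | (u0, ps) => gmerge (fgrave u0 ++ xbody ps)
  end.

End Coordinates.

(* Main.v *)
Require Import Defs.
From HB Require Import structures.
From mathcomp Require Import all_boot monoid zify.
Set Implicit Arguments. Unset Strict Implicit. Unset Printing Implicit Defensive.


Section Words.
Variables (A : eqType) (L : pred (seq A)).
Hypothesis HL : factorial_lang L.

Lemma HLf u v x : L (u ++ v ++ x) -> v != [::] -> L v.
Proof. by case: HL => _ _ H _; apply: H. Qed.

Lemma HLa (a : A) : L [:: a].
Proof. by case: HL. Qed.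

Lemma take_belast_rcons (s : seq A) a : take (size (rcons s a)).-1 (rcons s a) = s.
Proof. by rewrite size_rcons /= -cats1 take_size_cat. Qed.

Lemma W1 X Y Z : Lddot L (X ++ Y ++ Z) -> Y != [::] -> ~~ L Y -> X = [::] /\ Z = [::].
Proof.
case/and4P=> _ _ Ha Ho HY HnL.
case: X Ho Ha => [|x X] Ho Ha; last first.
  by rewrite /word_omega /= in Ho; move: (HLf Ho HY); rewrite (negbTE HnL).
split=> //; clear Ho; case/lastP: Z Ha => [|Z z] //= Ha.
rewrite /word_alpha -rcons_cat take_belast_rcons in Ha.
by move: (HLf (u:=[::]) Ha HY); rewrite (negbTE HnL).
Qed.

Lemma Lddot_size v : Lddot L v -> 2 <= size v.
Proof.
case/and4P=> /eqP Hn HnL _ _; case: v Hn HnL => [|a [|b v]] //= _.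
by rewrite HLa.
Qed.

Lemma size_factor (w : seq A) p q : q < size w -> size (factor w p q) = q.+1 - p.
Proof. move=> Hq; rewrite /factor size_takel // size_drop; lia. Qed.

Lemma factor_split (w : seq A) p p' q' q : p <= p' -> p' <= q' -> q' <= q -> q < size w ->
  factor w p q = take (p' - p) (drop p w) ++ factor w p' q' ++ take (q - q') (drop q'.+1 w).
Proof.
move=> h1 h2 h3 h4; rewrite /factor.
have -> : q.+1 - p = (p' - p) + ((q'.+1 - p') + (q - q')) by lia.
rewrite takeD takeD !drop_drop.
have -> : p' - p + p = p' by lia.
by have -> : q'.+1 - p' + p' = q'.+1 by lia.
Qed.

Lemma contain (w : seq A) p p' q' q : p <= p' -> p' <= q' -> q' <= q -> q < size w ->
  Lddot L (factor w p q) -> ~~ L (factor w p' q') -> p = p' /\ q = q'.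
Proof.
move=> h1 h2 h3 h4 HD HnL; rewrite (factor_split h1 h2 h3 h4) in HD.
have Hne : factor w p' q' != [::].
  by rewrite -size_eq0 size_factor; [lia|lia].
case: (W1 HD Hne HnL) => /(congr1 size) H1 /(congr1 size) H2.
rewrite size_takel /= in H1; last by rewrite size_drop; lia.
rewrite size_takel /= in H2; last by rewrite size_drop; lia.
lia.
Qed.

Lemma factor_L (w : seq A) p q : L w -> p <= q -> q < size w -> L (factor w p q).
Proof.
move=> Hw h1 h2; apply: (@HLf (take p w) _ (drop q.+1 w)).
  have -> : drop q.+1 w = drop (q.+1 - p) (drop p w).
    by rewrite drop_drop; congr drop; lia.
  by rewrite /factor !cat_take_drop.
by rewrite -size_eq0 size_factor; lia.
Qed.

Lemma takedrop_cat (x y : seq A) i k : i + k <= size x ->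
  take k (drop i (x ++ y)) = take k (drop i x).
Proof.
move=> H; case: k H => [|k] H; first by rewrite !take0.
rewrite drop_cat ifT; last by lia.
rewrite take_cat size_drop; case: ifP => // Hk.
have -> : k.+1 - (size x - i) = 0 by lia.
rewrite take0 cats0 take_oversize // size_drop; lia.
Qed.

Lemma factor_cat (x y : seq A) p q : p <= q.+1 -> q < size x -> factor (x ++ y) p q = factor x p q.
Proof. move=> h1 h2; rewrite /factor takedrop_cat //; lia. Qed.

Lemma factor_shift (x y : seq A) p q : factor (x ++ y) (p + size x) (q + size x) = factor y p q.
Proof.
rewrite /factor drop_cat ifF; last by lia.
have -> : p + size x - size x = p by lia.
by have -> : (q + size x).+1 - (p + size x) = q.+1 - p by lia.
Qed.

Definition E (w : seq A) (ps : seq nat) : seq (nat * nat) :=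
  [seq (p, q) | p <- ps, q <- iota p (size w - p)].
Definition occsP (w : seq A) ps := [seq pq <- E w ps | Lddot L (factor w pq.1 pq.2)].
Definition shift n (os : seq (nat * nat)) := [seq (pq.1 + n, pq.2 + n) | pq <- os].

Lemma occsE w : occs L w = occsP w (iota 0 (size w)).
Proof. by []. Qed.

Lemma mem_E w ps pq : pq \in E w ps -> [/\ pq.1 \in ps, pq.1 <= pq.2 & pq.2 < size w].
Proof.
elim: ps => [|p ps IH] //; rewrite /E allpairs_cons mem_cat => /orP [|H].
  case/mapP=> q; rewrite mem_iota => /andP [h1 h2] -> /=.
  rewrite mem_head h1; split=> //; lia.
by case: (IH H) => h1 h2 h3; rewrite in_cons h1 orbT.
Qed.

Lemma mem_occsP w ps pq : pq \in occsP w ps ->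
  [/\ pq.1 \in ps, pq.1 <= pq.2, pq.2 < size w & Lddot L (factor w pq.1 pq.2)].
Proof. by rewrite mem_filter => /andP [HD /mem_E [h1 h2 h3]]. Qed.

Lemma occsP_mem w ps p q : p \in ps -> p <= q -> q < size w -> Lddot L (factor w p q) ->
  (p, q) \in occsP w ps.
Proof.
move=> h1 h2 h3 HD; rewrite mem_filter HD /=.
elim: ps h1 => // p0 ps IH; rewrite in_cons => /orP [/eqP <-|H];
  rewrite /E allpairs_cons mem_cat; apply/orP; [left|right; exact: IH].
by apply/mapP; exists q => //; rewrite mem_iota; lia.
Qed.

Lemma Lddot_nL v : Lddot L v -> ~~ L v.
Proof. by case/and4P. Qed.

Lemma L_occs w : L w -> occs L w = [::].
Proof.
move=> Hw; case E0: (occs L w) => [|a os] //.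
have: a \in occs L w by rewrite E0 mem_head.
case/mem_occsP => _ h1 h2 /Lddot_nL; by rewrite factor_L.
Qed.

Lemma behead_take (s : seq A) n : behead (take n.+1 s) = take n (behead s).
Proof. by case: s. Qed.

Lemma occs_L w : w != [::] -> occs L w = [::] -> L w.
Proof.
move=> Hne H0.
have key : forall n p, p + n < size w -> L (factor w p (p + n)).
  elim=> [|n IH] p Hp.
    have: size (factor w p (p + 0)) = 1 by rewrite size_factor //; lia.
    by case: (factor w p (p + 0)) => [|a [|]] //= _; apply: HLa.
  case HLv: (L (factor w p (p + n.+1))) => //.
  have HD : Lddot L (factor w p (p + n.+1)).
    apply/and4P; split.
    - by rewrite -size_eq0 size_factor //; lia.
    - by rewrite HLv.
    - rewrite /word_alpha size_factor; last lia.
      rewrite /factor take_takel; last lia.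
      have -> : ((p + n.+1).+1 - p).-1 = (p + n).+1 - p by lia.
      by apply: IH; lia.
    - rewrite /word_omega /factor.
      have -> : (p + n.+1).+1 - p = (n.+1).+1 by lia.
      rewrite behead_take -drop1 drop_drop.
      have := IH (p.+1) ltac:(lia); rewrite /factor.
      by have -> : (p.+1 + n).+1 - p.+1 = n.+1 by lia; rewrite addn1.
  have: (p, p + n.+1) \in occs L w by rewrite occsE; apply: occsP_mem HD; rewrite ?mem_iota; lia.
  by rewrite H0.
have := key (size w).-1 0; rewrite /factor drop0 add0n.
have Hs : 0 < size w by case: (w) Hne.
have -> : ((size w).-1).+1 - 0 = size w by lia.
rewrite take_size; apply; lia.
Qed.

Lemma filter_shift n (P P' : pred (nat * nat)) s :
  (forall pq, P (pq.1 + n, pq.2 + n) = P' pq) -> filter P (shift n s) = shift n (filter P' s).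
Proof. by move=> H; elim: s => [|a s IH] //=; rewrite H; case: (P' a) => //=; rewrite IH. Qed.

Lemma E_shift (x y : seq A) ps :
  E (x ++ y) [seq size x + p | p <- ps] = shift (size x) (E y ps).
Proof.
elim: ps => [|p ps IH] //; rewrite map_cons /E !allpairs_cons -!/(E _ _) IH /shift map_cat; congr cat.
rewrite size_cat.
have -> : size x + size y - (size x + p) = size y - p by lia.
rewrite iotaDl -!map_comp; apply: eq_map => q /=.
by rewrite (addnC p) (addnC q).
Qed.

Lemma occs_cat (x y : seq A) :
  occs L (x ++ y) = occsP (x ++ y) (iota 0 (size x)) ++ shift (size x) (occs L y).
Proof.
rewrite occsE /occsP {1}size_cat iotaD /E allpairs_cat filter_cat -/(E _ _) -/(E _ _); congr cat.
rewrite add0n -(addn0 (size x)) iotaDl addn0 E_shift.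
apply: filter_shift => pq /=; by rewrite factor_shift.
Qed.

Lemma occsP_prefix (x y : seq A) ps :
  (forall p, p \in ps -> p <= size x) ->
  (forall p q, p \in ps -> size x <= q -> q < size x + size y ->
     ~~ Lddot L (factor (x ++ y) p q)) ->
  occsP (x ++ y) ps = occsP x ps.
Proof.
elim: ps => [|p ps IH] H1 H2 //.
rewrite /occsP /E !allpairs_cons !filter_cat -!/(E _ _) -!/(occsP _ _) IH; first last.
- by move=> p' q' Hp'; apply: H2; rewrite in_cons Hp' orbT.
- by move=> p' Hp'; apply: H1; rewrite in_cons Hp' orbT.
congr cat.
have Hp := H1 p (mem_head _ _).
rewrite size_cat.
have -> : size x + size y - p = (size x - p) + size y by lia.
rewrite iotaD map_cat filter_cat.
have -> : p + (size x - p) = size x by lia.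
rewrite [X in _ ++ X](eq_in_filter (a2 := pred0)) ?filter_pred0 ?cats0; last first.
  move=> pq /mapP [q]; rewrite mem_iota => /andP [h1 h2] -> /=.
  by apply/negbTE/H2; rewrite ?mem_head; lia.
apply: eq_in_filter => pq /mapP [q]; rewrite mem_iota => /andP [h1 h2] -> /=.
by rewrite factor_cat //; lia.
Qed.

Lemma occs_head z p1 q1 rz : occs L z = (p1, q1) :: rz ->
  [/\ p1 < q1, q1 < size z, Lddot L (factor z p1 q1), L (take q1 z) & take q1 z != [::]].
Proof.
move=> H.
have : (p1, q1) \in occs L z by rewrite H mem_head.
rewrite occsE; case/mem_occsP => _ /= h1 h2 HD.
have h3 : p1 < q1 by move: (Lddot_size HD); rewrite size_factor //; lia.
have Hc := occs_cat (take p1 z) (drop p1 z).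
rewrite cat_take_drop size_takel in Hc; last lia.
have HP0 : occsP z (iota 0 p1) = [::].
  case E0: (occsP z (iota 0 p1)) => [|a os] //.
  rewrite H E0 in Hc; case: Hc => Ha _.
  have: a \in occsP z (iota 0 p1) by rewrite E0 mem_head.
  by case/mem_occsP; rewrite -Ha mem_iota /=; lia.
have Hz0 : occs L (take q1 z) = [::].
  have Hc2 := occs_cat (take p1 z) (take (q1 - p1) (drop p1 z)).
  rewrite -takeD subnKC in Hc2; last lia.
  rewrite size_takel in Hc2; last lia.
  rewrite Hc2 (@L_occs (take (q1 - p1) (drop p1 z))) ?cats0; last first.
    case/and4P: HD => _ _ Ha _; move: Ha.
    rewrite /word_alpha size_factor // /factor take_takel; last lia.
    by have -> : (q1.+1 - p1).-1 = q1 - p1 by lia.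
  case E1: (occsP (take q1 z) (iota 0 p1)) => [|a os] //.
  have: a \in occsP (take q1 z) (iota 0 p1) by rewrite E1 mem_head.
  case: a E1 => p q E1; case/mem_occsP => /= Hp h4.
  rewrite size_takel; last lia.
  move=> h5 HD'.
  have: (p, q) \in occsP z (iota 0 p1).
    apply: occsP_mem => //; first lia.
    rewrite -(cat_take_drop q1 z) factor_cat //; first lia.
    by rewrite size_takel; lia.
  by rewrite HP0.
split=> //; last by rewrite -size_eq0 size_takel; lia.
apply: occs_L => //; by rewrite -size_eq0 size_takel; lia.
Qed.

Lemma occs_last w a os pm qm : occs L w = a :: os -> last a os = (pm, qm) ->
  [/\ pm < qm, qm < size w, Lddot L (factor w pm qm), L (drop pm.+1 w) & drop pm.+1 w != [::]].
Proof.
move=> H Hl.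
have : (pm, qm) \in occs L w by rewrite H -Hl mem_last.
rewrite occsE; case/mem_occsP => _ /= h1 h2 HD.
have h3 : pm < qm by move: (Lddot_size HD); rewrite size_factor //; lia.
have Hne : drop pm.+1 w != [::] by rewrite -size_eq0 size_drop; lia.
have Hc := occs_cat (take pm.+1 w) (drop pm.+1 w).
rewrite cat_take_drop size_takel in Hc; last lia.
split=> //; apply: occs_L => //.
case E0: (occs L (drop pm.+1 w)) => [|b bs] //.
have: last (0, 0) (occs L w) = (pm, qm) by rewrite H.
rewrite Hc E0 last_cat /shift map_cons /= last_map => -[] /=; lia.
Qed.

Lemma occs_catL w z p1 q1 rz : occs L z = (p1, q1) :: rz ->
  occs L (w ++ z) = occs L (w ++ take q1 z) ++ shift (size w) (occs L z).
Proof.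
move=> H; case: (occs_head H) => h1 h2 HD Lz0 _.
rewrite occs_cat (occs_cat w (take q1 z)) (L_occs Lz0) cats0; congr cat.
rewrite -{1}(cat_take_drop q1 z) catA occsP_prefix //.
  by move=> p; rewrite mem_iota size_cat; lia.
move=> p q; rewrite mem_iota !size_cat size_takel ?size_drop => [Hp h3 h4|]; last lia.
rewrite -catA cat_take_drop; apply/negP => HD'.
have := contain (w := w ++ z) (p' := p1 + size w) (q' := q1 + size w) _ _ _ _ HD'.
rewrite factor_shift (Lddot_nL HD) size_cat => /(_ _ _ _ _ isT) []; lia.
Qed.

Lemma occs_catR w z a os pm qm : occs L w = a :: os -> last a os = (pm, qm) ->
  occs L (w ++ z) = occs L w ++ shift pm.+1 (occs L (drop pm.+1 w ++ z)).
Proof.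
move=> H Hl; case: (occs_last H Hl) => h1 h2 HD Lwm _.
have Hc := occs_cat (take pm.+1 w) (drop pm.+1 w ++ z).
rewrite catA cat_take_drop size_takel in Hc; last lia.
rewrite Hc; congr cat.
have Hc2 := occs_cat (take pm.+1 w) (drop pm.+1 w).
rewrite cat_take_drop size_takel in Hc2; last lia.
rewrite Hc2 (L_occs Lwm) cats0 occsP_prefix //.
  by move=> p; rewrite mem_iota; lia.
move=> p q; rewrite mem_iota => Hp h3 h4; apply/negP => HD'.
have := contain (w := w ++ z) (p' := pm) (q' := qm) _ _ _ _ HD'.
rewrite factor_cat // ?(Lddot_nL HD) ?size_cat => [/(_ _ _ _ _ isT) []|]; lia.
Qed.

Section Group.
Local Open Scope group_scope.
Variables (G : groupType) (f : seq A -> G).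

Lemma mid_cons2 w p q p' q' os : mid_prod f w ((p, q) :: (p', q') :: os) =
  f (factor w p q) * f (take (q' - p.+1) (drop p.+1 w)) * mid_prod f w ((p', q') :: os).
Proof. by []. Qed.

Lemma MP1 (x y : seq A) os : mid_prod f (x ++ y) (shift (size x) os) = mid_prod f y os.
Proof.
elim: os => [|[p q] os IH] //; case: os IH => [|[p' q'] os] IH.
  by rewrite /= factor_shift.
rewrite /shift map_cons -/(shift _ _) /= in IH *.
rewrite factor_shift IH; congr (_ * _ * _); congr f.
rewrite drop_cat ifF; last lia.
have -> : (p + size x).+1 - size x = p.+1 by lia.
by have -> : q' + size x - (p + size x).+1 = q' - p.+1 by lia.
Qed.

Lemma MP2 (x y : seq A) os : (forall pq, pq \in os -> pq.1 <= pq.2 < size x) ->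
  mid_prod f (x ++ y) os = mid_prod f x os.
Proof.
elim: os => [|[p q] os IH] //; case: os IH => [|[p' q'] os] IH H.
  have /andP [h1 h2] := H _ (mem_head _ _); rewrite /= in h1 h2.
  by rewrite /= factor_cat //; lia.
have /andP [h1 h2] := H _ (mem_head _ _); rewrite /= in h1 h2.
have /andP [h3' h4'] : (p', q').1 <= (p', q').2 < size x by apply: H; rewrite in_cons mem_head orbT.
rewrite /= in h3' h4'.
rewrite !mid_cons2 factor_cat; [|lia|lia].
rewrite takedrop_cat; last lia.
rewrite IH // => pq Hpq; apply: H; by rewrite in_cons Hpq orbT.
Qed.

Lemma MP3 w a os1 b os2 :
  mid_prod f w ((a :: os1) ++ (b :: os2)) =
  mid_prod f w (a :: os1) * f (take (b.2 - (last a os1).1.+1) (drop (last a os1).1.+1 w))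
  * mid_prod f w (b :: os2).
Proof.
elim: os1 a => [|c os1 IH] [p q]; first by case: b.
case: c IH => p' q' IH.
change (mid_prod f w ((p, q) :: (p', q') :: (os1 ++ b :: os2)) =
  mid_prod f w ((p, q) :: (p', q') :: os1) *
  f (take (b.2 - (last (p', q') os1).1.+1) (drop (last (p', q') os1).1.+1 w)) *
  mid_prod f w (b :: os2)).
by rewrite mid_cons2 -cat_cons IH mid_cons2 !mulgA.
Qed.

End Group.

Section Group2.
Local Open Scope group_scope.
Variables (G : groupType) (f : seq A -> G).

Lemma take_shift (x y : seq A) n : take (n + size x) (x ++ y) = x ++ take n y.
Proof. by rewrite take_cat ifF ?addnK //; lia. Qed.

Lemma drop_shift (x y : seq A) n : drop (n + size x).+1 (x ++ y) = drop n.+1 y.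
Proof. rewrite drop_cat ifF; last lia. by have -> : (n + size x).+1 - size x = n.+1 by lia. Qed.

Lemma last_shift n p q s :
  last (p + n, q + n) (shift n s) = ((last (p, q) s).1 + n, (last (p, q) s).2 + n).
Proof. by elim: s p q => [|[p' q'] s IH] p q //=; rewrite IH. Qed.

Lemma last_cat_cons (x b : nat * nat) X Y : last x (X ++ b :: Y) = last b Y.
Proof. by rewrite last_cat. Qed.

Lemma shift_cons n a s : shift n (a :: s) = (a.1 + n, a.2 + n) :: shift n s.
Proof. by []. Qed.

Lemma sc_first_L u : L u -> sc_first L u = u.
Proof. by move=> H; rewrite /sc_first L_occs. Qed.

Lemma sc_last_L u : L u -> sc_last L u = u.
Proof. by move=> H; rewrite /sc_last L_occs. Qed.

Lemma sc_first_cons u p q os : occs L u = (p, q) :: os -> sc_first L u = take q u.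
Proof. by rewrite /sc_first => ->. Qed.

Lemma sc_last_cons u a os : occs L u = a :: os -> sc_last L u = drop (last a os).1.+1 u.
Proof. by rewrite /sc_last => ->. Qed.

Lemma sc_mid_eq u : sc_mid L f u = mid_prod f u (occs L u).
Proof. by []. Qed.

Lemma scL w z : z != [::] -> ~~ L z -> [/\ sc_last L (w ++ z) = sc_last L z,
  L (w ++ sc_first L z) -> sc_first L (w ++ z) = w ++ sc_first L z /\
     sc_mid L f (w ++ z) = sc_mid L f z &
  ~~ L (w ++ sc_first L z) -> sc_first L (w ++ z) = sc_first L (w ++ sc_first L z) /\
     sc_mid L f (w ++ z) = sc_mid L f (w ++ sc_first L z) * f (sc_last L (w ++ sc_first L z))
       * sc_mid L f z].
Proof.
move=> nz nLz.
case Ez: (occs L z) => [|[p1 q1] rz]; first by move: nLz; rewrite occs_L.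
have Hs := occs_catL w Ez.
case: (occs_head Ez) => h1 h2 HD Lz0 nz0.
rewrite (sc_first_cons Ez) (sc_last_cons Ez) !sc_mid_eq Ez.
have Hwz : w ++ z = (w ++ take q1 z) ++ drop q1 z by rewrite -catA cat_take_drop.
have Hsv : size (w ++ take q1 z) = size w + q1 by rewrite size_cat size_takel //; lia.
have nv : w ++ take q1 z != [::] by move: nz0; rewrite -!size_eq0 size_cat; lia.
rewrite Ez shift_cons /= in Hs.
case Ev: (occs L (w ++ take q1 z)) => [|[pb qb] B0]; rewrite Ev /= in Hs.
  have Lv : L (w ++ take q1 z) by apply: occs_L.
  rewrite Lv (sc_first_cons Hs) (sc_last_cons Hs) Hs last_shift drop_shift take_shift.
  by rewrite -[_ :: shift _ rz]/(shift (size w) ((p1, q1) :: rz)) MP1; split.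
have nLv : ~~ L (w ++ take q1 z) by apply/negP => /L_occs; rewrite Ev.
have Hmem : forall pq, pq \in occs L (w ++ take q1 z) -> pq.1 <= pq.2 < size w + q1.
  by move=> pq; rewrite occsE => /mem_occsP [_ h h' _]; rewrite -Hsv h h'.
have Hlm : (last (pb, qb) B0).1 <= (last (pb, qb) B0).2 < size w + q1.
  by apply: Hmem; rewrite Ev mem_last.
have /andP [hb1 hb2] : (pb, qb).1 <= (pb, qb).2 < size w + q1 by apply: Hmem; rewrite Ev mem_head.
rewrite /= in hb1 hb2.
rewrite (negbTE nLv) (sc_first_cons Hs) (sc_last_cons Hs) Hs (sc_first_cons Ev) (sc_last_cons Ev).
rewrite last_cat_cons last_shift drop_shift; split => // _.
rewrite -cat_cons MP3 -[_ :: shift _ rz]/(shift (size w) ((p1, q1) :: rz)) MP1.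
rewrite [(_, _).2]/=.
move: Hlm; set lb := last (pb, qb) B0 => /andP [hl1 hl2].
rewrite Hwz takel_cat ?Hsv; last lia.
rewrite MP2; last by move=> pq Hpq; rewrite Hsv; apply: Hmem; rewrite Ev.
split => //; congr (_ * f _ * _).
rewrite takedrop_cat ?Hsv; last lia.
by rewrite take_oversize // size_drop Hsv; lia.
Qed.

Lemma MP1' (x y : seq A) n os : size x = n -> mid_prod f (x ++ y) (shift n os) = mid_prod f y os.
Proof. by move=> <-; apply: MP1. Qed.

Lemma drop_shift' (x y : seq A) n k : size x = k -> drop (n + k).+1 (x ++ y) = drop n.+1 y.
Proof. by move=> <-; apply: drop_shift. Qed.

Lemma scR w z : w != [::] -> ~~ L w -> [/\ sc_first L (w ++ z) = sc_first L w,
  L (sc_last L w ++ z) -> sc_mid L f (w ++ z) = sc_mid L f w /\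
     sc_last L (w ++ z) = sc_last L w ++ z &
  ~~ L (sc_last L w ++ z) ->
     sc_mid L f (w ++ z) = sc_mid L f w * f (sc_first L (sc_last L w ++ z))
       * sc_mid L f (sc_last L w ++ z) /\
     sc_last L (w ++ z) = sc_last L (sc_last L w ++ z)].
Proof.
move=> nw nLw.
case Ew: (occs L w) => [|[p1 q1] os]; first by move: nLw; rewrite occs_L.
case El: (last (p1, q1) os) => [pm qm].
have Hs := occs_catR z Ew El.
case: (occs_last Ew El) => h1 h2 HD Lwm nwm.
have Hmem : forall pq, pq \in occs L w -> pq.1 <= pq.2 < size w.
  by move=> pq; rewrite occsE => /mem_occsP [_ h h' _]; rewrite h h'.
have /andP [hq1 hq2] : (p1, q1).1 <= (p1, q1).2 < size w by apply: Hmem; rewrite Ew mem_head.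
rewrite /= in hq1 hq2.
rewrite (sc_last_cons Ew) El [(pm, qm).1]/= (sc_first_cons Ew) !sc_mid_eq Ew.
have Hwz : w ++ z = take pm.+1 w ++ (drop pm.+1 w ++ z) by rewrite catA cat_take_drop.
have Hsu : size (take pm.+1 w) = pm.+1 by rewrite size_takel; lia.
have nv : drop pm.+1 w ++ z != [::] by move: nwm; rewrite -!size_eq0 size_cat; lia.
rewrite Ew cat_cons in Hs.
rewrite (sc_first_cons Hs) takel_cat; last lia.
have HM : mid_prod f (w ++ z) ((p1, q1) :: os) = mid_prod f w ((p1, q1) :: os).
  by rewrite MP2 // => pq Hpq; apply: Hmem; rewrite Ew.
case Ev: (occs L (drop pm.+1 w ++ z)) => [|[c1 c2] C0]; rewrite Ev in Hs.
  have Lv : L (drop pm.+1 w ++ z) by apply: occs_L.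
  rewrite Lv; split => // _.
  rewrite [shift _ [::]]/= cats0 in Hs.
  rewrite (sc_last_cons Hs) Hs El [(pm, qm).1]/= HM drop_cat ifT; [by split | lia].
have nLv : ~~ L (drop pm.+1 w ++ z) by apply/negP => /L_occs; rewrite Ev.
rewrite (negbTE nLv); split => // _.
rewrite shift_cons [(_, _).1]/= [(_, _).2]/= in Hs.
rewrite (sc_last_cons Hs) Hs (sc_first_cons Ev) (sc_last_cons Ev).
rewrite last_cat_cons last_shift -cat_cons MP3 El HM [(_, _).2]/= [(_, _).1]/=.
rewrite -[_ :: shift _ C0]/(shift pm.+1 ((c1, c2) :: C0)).
rewrite Hwz (MP1' _ _ Hsu) (drop_shift' _ _ Hsu) drop_cat Hsu ltnn subnn drop0 addnK.
by split.
Qed.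

End Group2.

Section Main.
Local Open Scope group_scope.
Variables (G : groupType) (f : seq A -> G).

Lemma nL_catl w z : w != [::] -> ~~ L w -> ~~ L (w ++ z).
Proof.
move=> nw nLw; apply/negP => H.
by move: (HLf (u := [::]) (x := z) H nw); rewrite (negbTE nLw).
Qed.

Lemma nL_catr w z : z != [::] -> ~~ L z -> ~~ L (w ++ z).
Proof.
move=> nz nLz; apply/negP => H.
have H' : L (w ++ z ++ [::]) by rewrite cats0.
by move: (HLf H' nz); rewrite (negbTE nLz).
Qed.

Lemma ne_catl (w z : seq A) : w != [::] -> w ++ z != [::].
Proof. by case: w. Qed.

Lemma ne_catr (w z : seq A) : z != [::] -> w ++ z != [::].
Proof. by case: w => //; case: z. Qed.

Lemma fhat_L u : u != [::] -> L u -> fhat L f u = f u.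
Proof. by move=> H1 H2; rewrite /fhat (negbTE H1) H2. Qed.

Lemma fhat_nL u : u != [::] -> ~~ L u ->
  fhat L f u = f (sc_first L u) * sc_mid L f u * f (sc_last L u).
Proof. by move=> H1 H2; rewrite /fhat (negbTE H1) (negbTE H2). Qed.

Lemma first_props u : u != [::] -> ~~ L u ->
  [/\ L (sc_first L u), sc_first L u != [::], L (sc_last L u) & sc_last L u != [::]].
Proof.
move=> nu nLu.
case Eu: (occs L u) => [|[p1 q1] os]; first by move: nLu; rewrite occs_L.
case El: (last (p1, q1) os) => [pm qm].
case: (occs_head Eu) => _ _ _ h1 h2; case: (occs_last Eu El) => _ _ _ h3 h4.
by rewrite (sc_first_cons Eu) (sc_last_cons Eu) El.
Qed.

Lemma fcheckA_L u : L u -> fcheckA L f u = map inl u.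
Proof. by move=> H; rewrite /fcheckA H. Qed.

Lemma fcheckA_nL u : ~~ L u -> fcheckA L f u =
  map inl (sc_first L u) ++ inr (sc_mid L f u) :: map inl (sc_last L u).
Proof. by move=> H; rewrite /fcheckA (negbTE H). Qed.

Lemma fgrave_L u : u != [::] -> L u -> fgrave L f u = map inl u.
Proof. by move=> H1 H2; rewrite /fgrave (negbTE H1) H2. Qed.

Lemma fgrave_nL u : u != [::] -> ~~ L u -> fgrave L f u =
  rcons (map inl (sc_first L u)) (inr (sc_mid L f u * f (sc_last L u))).
Proof. by move=> H1 H2; rewrite /fgrave (negbTE H1) (negbTE H2). Qed.

Lemma facute_L u : u != [::] -> L u -> facute L f u = map inl u.
Proof. by move=> H1 H2; rewrite /facute (negbTE H1) H2. Qed.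

Lemma facute_nL u : u != [::] -> ~~ L u -> facute L f u =
  inr (f (sc_first L u) * sc_mid L f u) :: map inl (sc_last L u).
Proof. by move=> H1 H2; rewrite /facute (negbTE H1) (negbTE H2). Qed.

Lemma xparse_map (s : seq A) (r : seq (A + G)) :
  xparse (map inl s ++ r) = let: (u, ps) := xparse r in (s ++ u, ps).
Proof.
elim: s => [|a s IH] /=; first by case: (xparse r).
by rewrite IH; case: (xparse r).
Qed.

Lemma xparse_map0 (s : seq A) : xparse (map inl s : seq (A + G)) = (s, [::]).
Proof. by have := xparse_map s ([::] : seq (A + G)); rewrite cats0 /= cats0. Qed.

Lemma xparse_r (g : G) (s : seq A) : xparse (inr g :: map inl s) = ([::], [:: (g, s)]).
Proof. by rewrite /= xparse_map0. Qed.

Lemma xparse_r2 (g g' : G) (s s' : seq A) :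
  xparse (inr g :: map inl s ++ inr g' :: map inl s') = ([::], [:: (g, s); (g', s')]).
Proof. by rewrite /= xparse_map xparse_r cats0. Qed.

Lemma gmerge_map (s : seq A) (r : seq (A + G)) : gmerge (map inl s ++ r) = map inl s ++ gmerge r.
Proof. by elim: s => [|a s IH] //=; rewrite IH. Qed.

Lemma gmerge_map0 (s : seq A) : gmerge (map inl s : seq (A + G)) = map inl s.
Proof. by have := gmerge_map s ([::] : seq (A + G)); rewrite !cats0. Qed.

Lemma gmerge_r1 (g : G) (s : seq A) : gmerge (inr g :: map inl s) = inr g :: map inl s.
Proof. by rewrite /= gmerge_map0; case: s. Qed.

Lemma gmerge_rr (g h : G) (x y : seq (A + G)) : gmerge x = inr h :: y -> gmerge (inr g :: x) = inr (g * h) :: y.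
Proof. by move=> /= ->. Qed.

Lemma fcheckX_1 (x : seq (A + G)) u0 (g : G) u : xparse x = (u0, [:: (g, u)]) ->
  fcheckX L f x = gmerge (fgrave L f u0 ++ inr g :: facute L f u).
Proof. by rewrite /fcheckX => ->. Qed.

Lemma fcheckX_2 (x : seq (A + G)) u0 (g : G) u (g' : G) u' : xparse x = (u0, [:: (g, u); (g', u')]) ->
  fcheckX L f x = gmerge (fgrave L f u0 ++ inr g :: inr (fhat L f u) :: inr g' :: facute L f u').
Proof. by rewrite /fcheckX => ->. Qed.

Lemma main w z : w != [::] -> z != [::] ->
  (fhat L f (w ++ z)
     = fhat L f (w ++ sc_first L z) * (f (sc_first L z))^-1 * fhat L f z
   /\ fhat L f (w ++ z)
     = fhat L f w * (f (sc_last L w))^-1 * fhat L f (sc_last L w ++ z))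
  /\ fcheckA L f (w ++ z) = fcheckX L f (fcheckA L f w ++ fcheckA L f z).
Proof.
move=> nw nz.
have nwz : w ++ z != [::] by apply: ne_catl.
split; [split|].
- case Lz: (L z).
    by rewrite sc_first_L // (fhat_L nz Lz) mulgVK.
  have nLz := negbT Lz.
  case: (scL f w nz nLz) => Hl H1 H2.
  case: (first_props nz nLz) => Lz0 nz0 _ _.
  have nv : w ++ sc_first L z != [::] by apply: ne_catl.
  rewrite (fhat_nL nwz (nL_catr w nz nLz)) (fhat_nL nz nLz) Hl.
  case Lv: (L (w ++ sc_first L z)).
    case: (H1 Lv) => -> ->; rewrite (fhat_L nv Lv).
    by rewrite !mulgA mulgVK.
  case: (H2 (negbT Lv)) => -> ->; rewrite (fhat_nL nv (negbT Lv)).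
  by rewrite !mulgA mulgVK.
- case Lw: (L w).
    by rewrite sc_last_L // (fhat_L nw Lw) mulgV mul1g.
  have nLw := negbT Lw.
  case: (scR f z nw nLw) => Hf H1 H2.
  case: (first_props nw nLw) => _ _ Lwm nwm.
  have nv : sc_last L w ++ z != [::] by apply: ne_catl.
  rewrite (fhat_nL nwz (nL_catl z nw nLw)) (fhat_nL nw nLw) Hf.
  case Lv: (L (sc_last L w ++ z)).
    case: (H1 Lv) => -> ->; rewrite (fhat_L nv Lv).
    by rewrite ?mulgA mulgK.
  case: (H2 (negbT Lv)) => -> ->; rewrite (fhat_nL nv (negbT Lv)).
  by rewrite ?mulgA mulgK.
- case Lw: (L w); case Lz: (L z).
  + rewrite (fcheckA_L Lw) (fcheckA_L Lz) -map_cat /fcheckX xparse_map0.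
    by [].
  + have nLz := negbT Lz.
    case: (scL f w nz nLz) => Hl H1 H2.
    case: (first_props nz nLz) => Lz0 nz0 Lzm nzm.
    have nv : w ++ sc_first L z != [::] by apply: ne_catl.
    rewrite (fcheckA_L Lw) (fcheckA_nL nLz) (fcheckA_nL (nL_catr w nz nLz)) Hl.
    rewrite catA -map_cat (fcheckX_1 (u0 := w ++ sc_first L z) (g := sc_mid L f z) (u := sc_last L z));
      last by rewrite xparse_map xparse_r cats0.
    rewrite (facute_L nzm Lzm).
    case Lv: (L (w ++ sc_first L z)).
      case: (H1 Lv) => -> ->.
      by rewrite (fgrave_L nv Lv) gmerge_map gmerge_r1.
    case: (H2 (negbT Lv)) => -> ->.
    rewrite (fgrave_nL nv (negbT Lv)) cat_rcons gmerge_map.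
    by rewrite (gmerge_rr _ (gmerge_r1 _ _)).
  + have nLw := negbT Lw.
    case: (scR f z nw nLw) => Hf H1 H2.
    case: (first_props nw nLw) => Lw0 nw0 Lwm nwm.
    have nv : sc_last L w ++ z != [::] by apply: ne_catl.
    rewrite (fcheckA_L Lz) (fcheckA_nL nLw) (fcheckA_nL (nL_catl z nw nLw)) Hf.
    rewrite -catA cat_cons -map_cat (fcheckX_1 (u0 := sc_first L w) (g := sc_mid L f w) (u := sc_last L w ++ z));
      last by rewrite xparse_map xparse_r cats0.
    rewrite (fgrave_L nw0 Lw0) gmerge_map.
    case Lv: (L (sc_last L w ++ z)).
      case: (H1 Lv) => -> ->.
      by rewrite (facute_L nv Lv) gmerge_r1.
    case: (H2 (negbT Lv)) => -> ->.
    rewrite (facute_nL nv (negbT Lv)) (gmerge_rr _ (gmerge_r1 _ _)).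
    by rewrite mulgA.
  + have nLw := negbT Lw; have nLz := negbT Lz.
    case: (scR f z nw nLw) => Hf _ H2R.
    case: (first_props nw nLw) => Lw0 nw0 Lwm nwm.
    case: (first_props nz nLz) => Lz0 nz0 Lzm nzm.
    case: (H2R (nL_catr (sc_last L w) nz nLz)) => Hm Hlast.
    rewrite (fcheckA_nL nLw) (fcheckA_nL nLz) (fcheckA_nL (nL_catl z nw nLw)) Hf Hm Hlast.
    rewrite -catA cat_cons catA -map_cat.
    rewrite (fcheckX_2 (u0 := sc_first L w) (g := sc_mid L f w) (u := sc_last L w ++ sc_first L z)
        (g' := sc_mid L f z) (u' := sc_last L z));
      last by rewrite xparse_map xparse_r2 cats0.
    rewrite (fgrave_L nw0 Lw0) (facute_L nzm Lzm) gmerge_map.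
    rewrite (gmerge_rr _ (gmerge_rr _ (gmerge_r1 _ _))).
    case: (scL f (sc_last L w) nz nLz) => HlL H1L H2L.
    rewrite HlL.
    have nv0 : sc_last L w ++ sc_first L z != [::] by apply: ne_catl.
    case Lv0: (L (sc_last L w ++ sc_first L z)).
      case: (H1L Lv0) => -> ->; rewrite (fhat_L nv0 Lv0).
      by rewrite !mulgA.
    case: (H2L (negbT Lv0)) => -> ->; rewrite (fhat_nL nv0 (negbT Lv0)).
    by rewrite !mulgA.
Qed.

End Main.
End Words.

Unset Implicit Arguments.
Local Open Scope group_scope.

Theorem lemma1 (A : eqType) (G : groupType) (L : pred (seq A))
  (f : seq A -> G) (w z : seq A) :
  factorial_lang L -> w != [::] -> z != [::] ->
  (fhat L f (w ++ z)
     = fhat L f (w ++ sc_first L z) * (f (sc_first L z))^-1 * fhat L f z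
   /\ fhat L f (w ++ z)
     = fhat L f w * (f (sc_last L w))^-1 * fhat L f (sc_last L w ++ z))
  /\ fcheckA L f (w ++ z) = fcheckX L f (fcheckA L f w ++ fcheckA L f z).
Proof. by move=> HL nw nz; apply: main. Qed.
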